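(* Let $G$ be a finite transitive permutation group on a set $\Omega$ and suppose that $x\in G$ is quasi-semiregular on $\Omega$. If $\Sigma$ is a system of imprimitivity preserved by $G$, then the permutation $x^\Sigma$ induced by $x$ on $\Sigma$ is quasi-semiregular. Equivalently, if $x\in G_\alpha$ is quasi-semiregular on $[G:G_\alpha]$, then for every subgroup $K$ with $G_\alpha\le K\le G$, $x$ is quasi-semiregular on $[G:K]$.
   Context: A permutation $g$ is quasi-semiregular if $\langle g\rangle$ has a unique fixed point and acts semiregularly (only the identity fixes a point) on the remaining points. $[G:K]$ denotes the set of right cosets of $K$ with $G$ acting by right multiplication. *)

(* Defs.v *)
From mathcomp Require Import all_boot all_fingroup.
Set Implicit Arguments. Unset Strict Implicit. Unset Printing Implicit Defensive.

Definition quasi_semiregular (U : finType) (S : {set U}) (f : U -> U) : Prop :=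
  exists2 a, a \in S &
    [/\ f a = a,
        (forall b, b \in S -> f b = b -> b = a) &
        (forall b k, b \in S -> b != a -> iter k f b = b ->
           forall c, c \in S -> iter k f c = c)].

Definition block_system (T : finType) (G : {set {perm T}})
  (Sigma : {set {set T}}) : Prop :=
  partition Sigma [set: T] /\
  (forall g B, g \in G -> B \in Sigma -> [set g y | y in B] \in Sigma).

Definition induced_on_blocks (T : finType) (x : {perm T}) : {set T} -> {set T} :=
  fun B => [set x y | y in B].

(* Main.v *)
Require Import Defs.
From mathcomp Require Import all_boot all_fingroup.
Set Implicit Arguments. Unset Strict Implicit.
Local Open Scope group_scope.

Lemma orb_div (T : finType) (y : {perm T}) (D : {set T}) :
  (forall z, z \in D -> y z \in D) ->
  (forall b j, b \in D -> (y ^+ j)%g b = b -> (y ^+ j = 1)%g) ->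
  #[y]%g %| #|D|.
Proof.
move=> stab semi.
have act : [acts <[y]>, on D | 'P].
  rewrite cycle_subG; apply/astabsP=> z /=.
  apply/idP/idP; last exact: stab.
  rewrite /aperm => Hz.
  (* y is a permutation of finite D: use card argument *)
  have sub : [set y w | w in D] \subset D.
    by apply/subsetP=> w /imsetP [u Hu ->]; exact: stab.
  have eqD : [set y w | w in D] = D.
    apply/eqP; rewrite eqEcard sub (card_imset _ (@perm_inj _ y)).
    by rewrite /= leqnn.
  by move: Hz; rewrite -{1}eqD => /imsetP [u Hu /perm_inj ->].
rewrite -(acts_sum_card_orbit act) dvdn_sum // => X /imsetP [b Hb ->].
have := card_orbit_stab 'P <[y]>%G b.
have -> : #|'C_<[y]>[b | 'P]%g| = 1%N.
  apply/eqP; rewrite -trivg_card1 -subG1; apply/subsetP=> z /setIP [/cycleP [j ->]].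
  move=> /astab1P /= Hj; rewrite inE; apply/eqP; exact: (semi b j Hb Hj).
by rewrite muln1 => ->.
Qed.

Lemma iter_ind (T : finType) (x : {perm T}) k B :
  iter k (induced_on_blocks x) B = [set (x ^+ k) z | z in B].
Proof.
elim: k => [|k IH] /=.
  by rewrite (eq_imset _ (fun z => perm1 z)) imset_id.
rewrite IH /induced_on_blocks -imset_comp; apply: eq_imset => z /=.
by rewrite expgSr permM.
Qed.

Theorem lemma2p1 (T : finType) (G : {group {perm T}}) (x : {perm T})
  (Sigma : {set {set T}}) :
  [transitive G, on [set: T] | 'P] ->
  x \in G ->
  quasi_semiregular [set: T] x ->
  block_system G Sigma ->
  quasi_semiregular Sigma (induced_on_blocks x).
Proof.
move=> tr xG [a _ [xa fixu semi]] [part closed].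
move: part => /and3P [/eqP cov triv nz0].
have acov : forall z, z \in cover Sigma by move=> z; rewrite cov inE.
pose B0 := pblock Sigma a.
have B0in : B0 \in Sigma by exact: pblock_mem.
have aB0 : a \in B0 by rewrite mem_pblock.
have yB0 : forall k, [set (x ^+ k) z | z in B0] = B0.
  move=> k; have Hin := closed _ _ (groupX k xG) B0in.
  have ain : a \in [set (x ^+ k) z | z in B0].
    by apply/imsetP; exists a => //; rewrite permX iter_fix.
  by rewrite -(def_pblock triv Hin ain).
have key : forall k B, B \in Sigma -> a \notin B ->
    [set (x ^+ k) z | z in B] = B -> x ^+ k = 1.
  move=> k B BS aB yB.
  set y := x ^+ k.
  have semy : forall b j, b != a -> (y ^+ j) b = b -> y ^+ j = 1.
    move=> b j ba; rewrite -expgnA permX => Hb.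
    apply/permP => c; rewrite perm1 permX.
    by apply: (semi b) => //; rewrite inE.
  have stab : forall D : {set T}, [set y z | z in D] = D ->
      forall z, z \in D -> y z \in D.
    by move=> D HD z zD; rewrite -HD; apply/imsetP; exists z.
  have d1 : #[y] %| #|B|.
    apply: orb_div; first exact: stab.
    move=> b j bB; apply: semy; apply: contraNneq aB => <-; done.
  have d2 : #[y] %| #|B0 :\ a|.
    apply: orb_div.
      move=> z /setD1P [za zB]; apply/setD1P; split.
        apply: contra_neq za => h; apply: (@perm_inj _ y).
        by rewrite h /y permX iter_fix.
      exact: stab (yB0 k) _ zB.
    by move=> b j /setD1P [ba _]; apply: semy.
  have cardB : #|B| = #|B0|.
    have : B != set0 by apply: contraNneq nz0 => <-.
    case/set0Pn => b bB.
    have : b \in orbit 'P G a by rewrite (atransP tr) ?inE.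
    case/orbitP => g gG /= gab.
    have Hin := closed _ _ gG B0in.
    have bin : b \in [set g z | z in B0] by apply/imsetP; exists a.
    rewrite -(def_pblock triv BS bB) (def_pblock triv Hin bin).
    exact: (card_imset _ (@perm_inj _ g)).
  move: d1; rewrite cardB (cardsD1 a) aB0 addnC (dvdn_addr _ d2) dvdn1.
  by rewrite order_eq1 => /eqP.
exists B0 => //; split.
- by have := yB0 1%N; rewrite expg1.
- move=> B BS fB.
  case aB: (a \in B); first by rewrite /B0 (def_pblock triv BS aB).
  have := key 1%N B BS (negbT aB); rewrite expg1 => /(_ fB) x1.
  have : B != set0 by apply: contraNneq nz0 => <-.
  case/set0Pn => b bB.
  have := fixu b; rewrite inE x1 perm1 => /(_ isT erefl) ba.
  by rewrite ba aB in bB.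
- move=> B k BS BB0 itB C CS.
  have aB : a \notin B.
    by apply: contra BB0 => aB; rewrite /B0 (def_pblock triv BS aB).
  rewrite iter_ind in itB.
  rewrite iter_ind (key k B BS aB itB).
  by rewrite (eq_imset _ (fun z => perm1 z)) imset_id.
Qed.
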